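(* A random joint choice rule $p$ on a finite set $X$ is consistent with state independent consumption dependent random utility if and only if it satisfies complete monotonicity, marginality, and choice set independence.
   Context: $X$ is finite, $\mathcal{X}$ the nonempty subsets of $X$, $\mathcal{L}(X)$ the linear orders on $X$, $N(x,A)=\{\succ: x\succ y\ \forall y\in A\setminus\{x\}\}$. A random joint choice rule assigns to each $A,B\in\mathcal{X}$ and $(x,y)\in A\times B$ a number $p(x,y,A,B)\ge0$ with $\sum_{x\in A}\sum_{y\in B}p(x,y,A,B)=1$. Its Möbius inverse $q$ is defined by $p(x,y,A,B)=\sum_{A\subseteq A'\subseteq X}\sum_{B\subseteq B'\subseteq X}q(x,y,A',B')$. A state independent transition function is a map $x\mapsto t(x)\in\Delta(\mathcal{L}(X))$ (a transition function not depending on the preference input), with $t_{\succ'}(x)$ the probability of $\succ'$. $p$ is consistent with state independent consumption dependent random utility if there exist $\nu\in\Delta(\mathcal{L}(X))$ and a state independent transition function $t$ with $p(x,y,A,B)=\sum_{\succ\in N(x,A)}\sum_{\succ'\in N(y,B)}\nu(\succ)t_{\succ'}(x)$ for all $A,B\in\mathcal{X}$, $(x,y)\in A\times B$. Complete monotonicity: $q(x,y,A,B)\ge0$ for all arguments. Marginality: for all $A,B,C\in\mathcal{X}$ and $x\in A$, $\sum_{y\in B}p(x,y,A,B)=\sum_{y\in C}p(x,y,A,C)$. Write $p(x,A)=\sum_{y\in X}p(x,y,A,X)$ (under marginality this equals $\sum_{y\in B}p(x,y,A,B)$ for any $B$). Choice set independence: for every $B\in\mathcal{X}$, $y\in B$,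 and all $A,A'\in\mathcal{X}$ containing $x$ with $p(x,A)>0$ and $p(x,A')>0$, $\frac{p(x,y,A,B)}{p(x,A)}=\frac{p(x,y,A',B)}{p(x,A')}$. *)

(* Defs.v *)
From HB Require Import structures.
From mathcomp Require Import all_boot all_order all_algebra.
Set Implicit Arguments. Unset Strict Implicit. Unset Printing Implicit Defensive.
Import Order.TTheory GRing.Theory Num.Theory.
Local Open Scope ring_scope.

Section Defs.
Variable X : finType.

(* A (strict) linear order on X, as a boolean relation: r (x,y) means x ≻ y. *)
Definition is_linorder (r : {ffun X * X -> bool}) : bool :=
  [&& [forall x, ~~ r (x, x)],
      [forall x, forall y, forall z, r (x, y) && r (y, z) ==> r (x, z)] &
      [forall x, forall y, (x != y) ==> r (x, y) || r (y, x)]].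

Definition linorder := {r : {ffun X * X -> bool} | is_linorder r}.

Definition succ (o : linorder) (x y : X) : bool := (val o) (x, y).

Definition inN (x : X) (A : {set X}) (o : linorder) : bool :=
  [forall y in A :\ x, succ o x y].

Variable R : realFieldType.

Definition is_distr (nu : {ffun linorder -> R}) : Prop :=
  (forall o, 0 <= nu o) /\ \sum_o nu o = 1.

(* p x y A B = p(x,y,A,B); only values with A,B nonempty, x∈A, y∈B matter. *)
Definition is_rjcr (p : X -> X -> {set X} -> {set X} -> R) : Prop :=
  (forall A B x y, A != set0 -> B != set0 -> x \in A -> y \in B ->
     0 <= p x y A B) /\
  (forall A B, A != set0 -> B != set0 ->
     \sum_(x in A) \sum_(y in B) p x y A B = 1).

(* Möbius inverse of p (the unique q with
   p(x,y,A,B) = Σ_{A⊆A'} Σ_{B⊆B'} q(x,y,A',B')), given by Möbius inversion. *)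
Definition mobius (p : X -> X -> {set X} -> {set X} -> R)
  (x y : X) (A B : {set X}) : R :=
  \sum_(A' : {set X} | A \subset A') \sum_(B' : {set X} | B \subset B')
    (-1) ^+ (#|A' :\: A| + #|B' :\: B|) * p x y A' B'.

Definition consistent_SICDRU (p : X -> X -> {set X} -> {set X} -> R) : Prop :=
  exists (nu : {ffun linorder -> R}) (t : X -> {ffun linorder -> R}),
    is_distr nu /\ (forall x, is_distr (t x)) /\
    forall A B x y, A != set0 -> B != set0 -> x \in A -> y \in B ->
      p x y A B = \sum_(o | inN x A o) \sum_(o' | inN y B o') nu o * t x o'.

Definition complete_monotonicity (p : X -> X -> {set X} -> {set X} -> R) : Prop :=
  forall A B x y, A != set0 -> B != set0 -> x \in A -> y \in B ->
    0 <= mobius p x y A B.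

Definition marginality (p : X -> X -> {set X} -> {set X} -> R) : Prop :=
  forall A B C x, A != set0 -> B != set0 -> C != set0 -> x \in A ->
    \sum_(y in B) p x y A B = \sum_(y in C) p x y A C.

Definition pmarg (p : X -> X -> {set X} -> {set X} -> R) (x : X) (A : {set X}) : R :=
  \sum_y p x y A setT.

Definition choice_set_independence (p : X -> X -> {set X} -> {set X} -> R) : Prop :=
  forall B y A A' x, B != set0 -> y \in B -> A != set0 -> A' != set0 ->
    x \in A -> x \in A' -> 0 < pmarg p x A -> 0 < pmarg p x A' ->
    p x y A B / pmarg p x A = p x y A' B / pmarg p x A'.

End Defs.

(* Main.v *)
Require Import Defs.
From HB Require Import structures.
From mathcomp Require Import all_boot all_order all_algebra.
From mathcomp Require Import ring lra.
Set Implicit Arguments. Unset Strict Implicit. Unset Printing Implicit Defensive.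
Import Order.TTheory GRing.Theory Num.Theory.
Local Open Scope ring_scope.



Section Gen.
Variable R : realFieldType.

Lemma sum_inv_zero (I : finType) (P : pred I) (F : I -> R) (s : I -> I) :
  involutive s -> (forall i, P (s i) = P i) -> (forall i, P i -> F (s i) = - F i) ->
  \sum_(i | P i) F i = 0.
Proof.
move=> sK Ps Fs.
have E : \sum_(i | P i) F i = \sum_(i | P (s i)) F (s i) by apply: reindex_inj; exact: inv_inj.
have E2 : \sum_(i | P (s i)) F (s i) = - \sum_(i | P i) F i.
  rewrite -sumrN; apply: eq_big => i; first by rewrite Ps.
  by rewrite Ps; apply: Fs.
lra.
Qed.

Variable X : finType.
Implicit Types (A B C : {set X}).

Definition tog (t : X) A := if t \in A then A :\ t else t |: A.

Lemma togK t : involutive (tog t).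
Proof.
move=> A; rewrite /tog; case: (boolP (t \in A)) => tA.
  by rewrite !inE eqxx /= setD1K.
by rewrite setU11 setU1K.
Qed.

Lemma sign_tog t A : (-1) ^+ #|tog t A| = - (-1) ^+ #|A| :> R.
Proof.
rewrite /tog; case: (boolP (t \in A)) => tA.
  by rewrite -{2}(setD1K tA) cardsU1 !inE eqxx /= exprS mulN1r opprK.
by rewrite cardsU1 tA /= exprS mulN1r.
Qed.

Lemma tog_in t A u : (u \in tog t A) = (if u == t then t \notin A else u \in A).
Proof.
rewrite /tog; case: (boolP (t \in A)) => tA; rewrite !inE;
  case: (eqVneq u t) => [->|//]; by rewrite ?tA.
Qed.

Lemma subtogA t A A' : t \notin A -> (A \subset tog t A') = (A \subset A').
Proof.
move=> tA; apply/subsetP/subsetP => H u uA; have := H u uA; rewrite ?tog_in;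
  case: (eqVneq u t) uA => [->|//]; by rewrite (negPf tA).
Qed.

Lemma subtogC t C A' : t \in C -> (tog t A' \subset C) = (A' \subset C).
Proof.
move=> tC; apply/subsetP/subsetP => H u.
  move=> uA; have := H u; rewrite tog_in; case: (eqVneq u t) => [->//|_]; by apply.
rewrite tog_in; case: (eqVneq u t) => [->//|_]; by apply: H.
Qed.

Lemma alt1 A C : A \subset C ->
  \sum_(A' : {set X} | (A \subset A') && (A' \subset C)) (-1) ^+ #|C :\: A'| = (A == C)%:R :> R.
Proof.
move=> AC; case: (eqVneq A C) => [<-|neq].
  rewrite (big_pred1 A) ?setDv ?cards0 ?expr0 // => A' /=.
  by rewrite eq_sym eqEsubset andbC.
have [t tCA] : exists t, t \in C :\: A.
  apply/set0Pn; rewrite setD_eq0; apply: contra neq => CA; by rewrite eqEsubset AC.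
move: tCA; rewrite inE => /andP [tA tC].
apply: (sum_inv_zero (s := tog t)); first exact: togK.
  by move=> A'; rewrite subtogA ?subtogC.
move=> A' _.
have -> : C :\: tog t A' = tog t (C :\: A').
  apply/setP => u; rewrite !inE !tog_in !inE; case: eqP => [->|_] //=; by rewrite ?tC ?tA ?andbT.
exact: sign_tog.
Qed.

Lemma alt2 A C : A \subset C ->
  \sum_(A' : {set X} | (A \subset A') && (A' \subset C)) (-1) ^+ #|A' :\: A| = (A == C)%:R :> R.
Proof.
move=> AC; case: (eqVneq A C) => [<-|neq].
  rewrite (big_pred1 A) ?setDv ?cards0 ?expr0 // => A' /=.
  by rewrite eq_sym eqEsubset andbC.
have [t tCA] : exists t, t \in C :\: A.
  apply/set0Pn; rewrite setD_eq0; apply: contra neq => CA; by rewrite eqEsubset AC.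
move: tCA; rewrite inE => /andP [tA tC].
apply: (sum_inv_zero (s := tog t)); first exact: togK.
  by move=> A'; rewrite subtogA ?subtogC.
move=> A' _.
have -> : tog t A' :\: A = tog t (A' :\: A).
  apply/setP => u; rewrite !inE !tog_in !inE; case: eqP => [->|_] //=; by rewrite ?tC ?tA ?andbT.
exact: sign_tog.
Qed.

End Gen.



Section Mob.
Variables (R : realFieldType) (X : finType).
Implicit Types (A B C : {set X}).

Definition mob1 (f : X -> {set X} -> R) x A :=
  \sum_(A' : {set X} | A \subset A') (-1) ^+ #|A' :\: A| * f x A'.

Lemma inv1 f x A : \sum_(A' : {set X} | A \subset A') mob1 f x A' = f x A.
Proof.
rewrite /mob1 (exchange_big_dep (fun A'' : {set X} => A \subset A'')) /=; last first.
  by move=> i j; apply: subset_trans.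
under eq_bigr => A'' H do rewrite -big_distrl /= alt1 //.
rewrite (bigD1 A) //= eqxx mul1r big1 ?addr0 // => A'' /andP[_ ne].
by rewrite eq_sym (negPf ne) mul0r.
Qed.

Lemma inv2 (g : X -> {set X} -> R) x A :
  mob1 (fun x A => \sum_(A' : {set X} | A \subset A') g x A') x A = g x A.
Proof.
rewrite /mob1; under eq_bigr => A' _ do rewrite big_distrr.
rewrite (exchange_big_dep (fun A'' : {set X} => A \subset A'')) /=; last first.
  by move=> i j; apply: subset_trans.
under eq_bigr => A'' H do rewrite -big_distrl /= alt2 //.
rewrite (bigD1 A) //= eqxx mul1r big1 ?addr0 // => A'' /andP[_ ne].
by rewrite eq_sym (negPf ne) mul0r.
Qed.

End Mob.



Section Lin.
Variable X : finType.
Implicit Types (A B C D : {set X}) (r : {ffun X * X -> bool}).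

Definition lin_on D r : bool :=
  [&& [forall p : X * X, r p ==> (p.1 \in D) && (p.2 \in D)],
      [forall x, ~~ r (x, x)],
      [forall x, forall y, forall z, r (x, y) && r (y, z) ==> r (x, z)] &
      [forall x in D, forall y in D, (x != y) ==> r (x, y) || r (y, x)]].

Lemma lo_lr D r x y : lin_on D r -> r (x, y) -> (x \in D) && (y \in D).
Proof. by case/and4P => /forallP /(_ (x, y)) /implyP H _ _ _ /H. Qed.
Lemma lo_l D r x y : lin_on D r -> r (x, y) -> x \in D.
Proof. by move=> h /(lo_lr h) /andP[]. Qed.
Lemma lo_r D r x y : lin_on D r -> r (x, y) -> y \in D.
Proof. by move=> h /(lo_lr h) /andP[]. Qed.
Lemma lo_irr D r x : lin_on D r -> r (x, x) = false.
Proof. by case/and4P => _ /forallP /(_ x) /negPf. Qed.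
Lemma lo_tr D r x y z : lin_on D r -> r (x, y) -> r (y, z) -> r (x, z).
Proof.
case/and4P => _ _ /forallP /(_ x) /forallP /(_ y) /forallP /(_ z) /implyP H _ a b.
by apply: H; rewrite a b.
Qed.
Lemma lo_tot D r x y : lin_on D r -> x \in D -> y \in D -> x != y -> r (x, y) || r (y, x).
Proof.
case/and4P => _ _ _ /forallP /(_ x) /implyP H xD yD.
by move: (H xD) => /forallP /(_ y) /implyP /(_ yD) /implyP.
Qed.
Lemma lo_asym D r x y : lin_on D r -> r (x, y) -> r (y, x) = false.
Proof.
move=> h a; apply/negP => b; have := lo_tr h a b; by rewrite (lo_irr x h).
Qed.
Lemma lin_onI D r :
  (forall x y, r (x, y) -> (x \in D) && (y \in D)) -> (forall x, r (x, x) = false) ->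
  (forall x y z, r (x, y) -> r (y, z) -> r (x, z)) ->
  (forall x y, x \in D -> y \in D -> x != y -> r (x, y) || r (y, x)) -> lin_on D r.
Proof.
move=> H1 H2 H3 H4; apply/and4P; split.
- by apply/forallP => -[x y]; apply/implyP; apply: H1.
- by apply/forallP => x; rewrite H2.
- by do 3 apply/forallP => ?; apply/implyP => /andP[]; apply: H3.
- apply/forallP => x; apply/implyP => xD; apply/forallP => y; apply/implyP => yD.
  by apply/implyP; apply: H4.
Qed.

Lemma max_exists (B : {set X}) (rl : X -> X -> bool) :
  (forall x, rl x x = false) -> (forall x y z, rl x y -> rl y z -> rl x z) ->
  (forall x y, x \in B -> y \in B -> x != y -> rl x y || rl y x) -> B != set0 ->
  exists2 t, t \in B & forall y, y \in B -> y != t -> rl t y.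
Proof.
move=> irr tr tot /set0Pn [x0 x0B].
pose S i := [set y in B | rl i y].
case: (@arg_maxnP _ x0 (mem B) (fun i => #|S i|) x0B) => t tB tmax.
exists t => // y yB ynt.
have tny : t != y by rewrite eq_sym.
case/orP: (tot t y tB yB tny) => // ryt.
have: (#|S t| < #|S y|)%N.
  apply: proper_card; apply/properP; split.
    apply/subsetP => z; rewrite !inE => /andP[zB tz]; by rewrite zB (tr _ _ _ ryt tz).
  exists t; first by rewrite inE ryt andbT; exact: tB.
  by rewrite inE irr andbF.
by rewrite ltnNge; move: (tmax y yB) => /= ->.
Qed.

Definition top D r t := (t \in D) && [forall y in D :\ t, r (t, y)].

Lemma topP D r t : reflect ((t \in D) /\ forall y, y \in D -> y != t -> r (t, y)) (top D r t).
Proof.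
apply: (iffP andP) => -[tD H]; split => //.
  move=> y yD ynt; move/forallP: H => /(_ y) /implyP; apply; by rewrite !inE ynt.
apply/forallP => y; apply/implyP; rewrite !inE => /andP[]; by move=> a b; apply: H.
Qed.

Lemma top_ex D r : lin_on D r -> D != set0 -> exists t, top D r t.
Proof.
move=> h D0; have [t tD H] := max_exists (fun x => lo_irr x h) (fun x y z => lo_tr h)
   (fun x y => lo_tot h) D0.
by exists t; apply/topP.
Qed.

Lemma top_uniq D r t t' : lin_on D r -> top D r t -> top D r t' -> t = t'.
Proof.
move=> h /topP [tD Ht] /topP [t'D Ht']; apply/eqP; apply: contraT => ne.
have ne' : t' != t by rewrite eq_sym.
have a := Ht' t tD ne; have b := Ht t' t'D ne'.
by rewrite (lo_asym h a) in b.
Qed.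

Definition restr t r := [ffun p : X * X => [&& r p, p.1 != t & p.2 != t]].
Definition ext D t r := [ffun p : X * X => r p || [&& p.1 == t, p.2 \in D & p.2 != t]].

Lemma ext_lin D t r : t \in D -> lin_on (D :\ t) r -> lin_on D (ext D t r).
Proof.
move=> tD h; apply: lin_onI.
- move=> x y; rewrite ffunE /= => /orP [/(lo_lr h)|/and3P[/eqP -> yD _]]; last by rewrite tD yD.
  by rewrite !inE => /andP [/andP[_ ->] /andP[_ ->]].
- by move=> x; rewrite ffunE /= (lo_irr x h); case: eqVneq => //= ->; rewrite andbF.
- move=> x y z; rewrite !ffunE /= => /orP [rxy|/and3P[/eqP xt yD yt]] /orP [ryz|/and3P[/eqP yt' zD zt]].
  + by rewrite (lo_tr h rxy ryz).
  + by have := lo_r h rxy; rewrite yt' !inE eqxx.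
  + have := lo_lr h ryz; rewrite !inE => /andP[/andP[_ _] /andP [zt zD]].
    by rewrite xt eqxx zD zt orbT.
  + by rewrite yt' eqxx in yt.
- move=> x y xD yD xy; rewrite !ffunE /=.
  case: (eqVneq x t) => [xt|xt]; first by subst; rewrite ?eqxx yD eq_sym ?xy !orbT.
  case: (eqVneq y t) => [yt|yt]; first by subst; rewrite ?eqxx xD ?xt !orbT.
  have := lo_tot h (x := x) (y := y); rewrite !inE xt yt xD yD /= => /(_ isT isT xy).
  by case/orP => ->; rewrite ?orbT.
Qed.

Lemma ext_top D t r : t \in D -> top D (ext D t r) t.
Proof.
move=> tD; apply/topP; split => // y yD yt; by rewrite ffunE /= eqxx yD yt orbT.
Qed.

Lemma restr_ext D t r : lin_on (D :\ t) r -> restr t (ext D t r) = r.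
Proof.
move=> h; apply/ffunP => -[x y]; rewrite !ffunE /=.
case rxy: (r (x, y)) => /=.
  by have := lo_lr h rxy; rewrite !inE => /andP [/andP[-> _] /andP[-> _]].
by case: (eqVneq x t); rewrite /= ?andbF.
Qed.

Lemma ext_restr D t r : lin_on D r -> top D r t -> ext D t (restr t r) = r.
Proof.
move=> h /topP [tD Ht]; apply/ffunP => -[x y]; rewrite !ffunE /=.
case rxy: (r (x, y)) => /=.
  have xD := lo_l h rxy; have yD := lo_r h rxy.
  case: (eqVneq x t) => [xt|xt] /=.
    rewrite yD /=; apply/eqP => yt; move: rxy; by rewrite xt yt (lo_irr t h).
  case: (eqVneq y t) => [yt|yt] //=.
  move: rxy; by rewrite yt (lo_asym h (Ht x xD xt)).
apply/negP => /and3P [/eqP xt yD yt]; move: rxy; by rewrite xt (Ht y yD yt).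
Qed.

Lemma restr_lin D t r : lin_on D r -> top D r t -> lin_on (D :\ t) (restr t r).
Proof.
move=> h ht; apply: lin_onI.
- move=> x y; rewrite ffunE /= => /and3P [rxy xt yt].
  by rewrite !inE xt yt (lo_l h rxy) (lo_r h rxy).
- by move=> x; rewrite ffunE /= (lo_irr x h).
- move=> x y z; rewrite !ffunE /= => /and3P [rxy xt _] /and3P [ryz _ zt].
  by rewrite (lo_tr h rxy ryz) xt zt.
- move=> x y; rewrite !inE => /andP[xt xD] /andP[yt yD] xy; rewrite !ffunE /= xt yt.
  by have := lo_tot h xD yD xy; rewrite !andbT.
Qed.

Definition L D r x := [set y in D | ~~ r (y, x)].

Lemma L_sub D r x : L D r x \subset D.
Proof. by apply/subsetP => y; rewrite inE => /andP[]. Qed.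

Lemma L_in D r x : lin_on D r -> x \in D -> x \in L D r x.
Proof. by move=> h xD; rewrite inE xD (lo_irr x h). Qed.

Lemma L_ext_t D t r : lin_on (D :\ t) r -> L D (ext D t r) t = D.
Proof.
move=> h; apply/setP => y; rewrite !inE ffunE /= eqxx /= !andbF orbF.
case: (boolP (y \in D)) => //= _; apply/negP => /(lo_r h); by rewrite !inE eqxx.
Qed.

Lemma L_ext D t r x : lin_on (D :\ t) r -> x \in D -> x != t ->
  L D (ext D t r) x = L (D :\ t) r x.
Proof.
move=> h xD xt; apply/setP => y; rewrite !inE ffunE /= (negPf xt) xD /= !andbT.
rewrite negb_or; case: (eqVneq y t) => /= _; rewrite ?andbF ?andbT //; by rewrite andbC.
Qed.

Lemma decomp (R : realFieldType) D (F : {ffun X * X -> bool} -> R) : D != set0 ->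
  \sum_(r | lin_on D r) F r = \sum_(t in D) \sum_(r | lin_on (D :\ t) r) F (ext D t r).
Proof.
move=> D0.
transitivity (\sum_(r | lin_on D r) \sum_(t | top D r t) F r).
  apply: eq_bigr => r hr; have [t0 ht0] := top_ex hr D0.
  rewrite (big_pred1 t0) // => t; apply/idP/eqP => [ht|->//]; exact: top_uniq ht ht0.
rewrite (exchange_big_dep (fun t => t \in D)) /=; last by move=> r t _ /andP[].
apply: eq_bigr => t tD.
rewrite (reindex_onto (ext D t) (restr t)) /=; last by move=> r /andP[hr ht]; exact: ext_restr.
apply: eq_bigl => r'; apply/idP/idP.
  by case/andP => /andP [hl ht] /eqP <-; exact: restr_lin.
by move=> h; rewrite ext_lin // ext_top // restr_ext // eqxx.
Qed.

End Lin.



Section Flow.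
Variables (R : realFieldType) (X : finType).
Implicit Types (A B C D : {set X}) (r : {ffun X * X -> bool}).
Variable w : X -> {set X} -> R.
Hypothesis wpos : forall x A, x \in A -> 0 <= w x A.

Definition out A := \sum_(x in A) w x A.
Definition K A x := if out A == 0 then (#|A|%:R)^-1 else w x A / out A.
Definition nuD D r := \prod_(x in D) K (L D r x) x.
Definition H D A x := \sum_(r | lin_on D r && (L D r x == A)) nuD D r.

Lemma out_ge0 A : 0 <= out A.
Proof. by apply: sumr_ge0 => x xA; apply: wpos. Qed.

Lemma K_ge0 A x : x \in A -> 0 <= K A x.
Proof.
move=> xA; rewrite /K; case: ifP => _; first by rewrite invr_ge0 ler0n.
by apply: divr_ge0; [apply: wpos | apply: out_ge0].
Qed.

Lemma K_sum A : A != set0 -> \sum_(x in A) K A x = 1.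
Proof.
move=> A0; case: (boolP (out A == 0)) => o0; rewrite /K ?o0 ?(negPf o0).
  rewrite sumr_const -(mulr_natr (#|A|%:R)^-1) mulVf // pnatr_eq0 -lt0n card_gt0 //.
by rewrite -big_distrl /= divff.
Qed.

Lemma outK A x : x \in A -> out A * K A x = w x A.
Proof.
move=> xA; rewrite /K; case: ifP => o0.
  move/eqP: (o0) => o0'; rewrite o0' mul0r.
  have := psumr_eq0P (P := mem A) (F := fun x => w x A) (fun i iA => wpos iA) o0'.
  by move=> /(_ x xA) ->.
by rewrite mulrC divfK // o0.
Qed.

Lemma nu_ext D t r : t \in D -> lin_on (D :\ t) r ->
  nuD D (ext D t r) = K D t * nuD (D :\ t) r.
Proof.
move=> tD h; rewrite /nuD (big_setD1 t tD) /= L_ext_t //; congr (_ * _).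
apply: eq_bigr => x; rewrite !inE => /andP[xt xD]; by rewrite L_ext.
Qed.

Lemma lin_set0 r : lin_on set0 r = (r == [ffun _ => false]).
Proof.
apply/idP/eqP => [h|->].
  apply/ffunP => -[x y]; rewrite ffunE; apply/negP => /(lo_l h); by rewrite inE.
by apply: lin_onI => [x y|x|x y z|x y]; rewrite ?ffunE ?inE.
Qed.

Lemma F1 D : \sum_(r | lin_on D r) nuD D r = 1.
Proof.
have [n le] := ubnP #|D|; elim: n D le => // n IH D le.
case: (eqVneq D set0) => [->|D0].
  rewrite (big_pred1 [ffun _ => false]); last by move=> r; rewrite /= lin_set0.
  by rewrite /nuD big_set0.
rewrite decomp //; rewrite -[RHS](K_sum D0); apply: eq_bigr => t tD.
under eq_bigr => r h do rewrite nu_ext //.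
rewrite -big_distrr /= IH ?mulr1 //.
by move: le; rewrite (cardsD1 t D) tD.
Qed.

Lemma H_out D A x : ~~ (A \subset D) -> H D A x = 0.
Proof.
move=> nAD; apply: big1 => r /andP[_ /eqP e]; by rewrite -e L_sub in nAD.
Qed.

Lemma H_dec D A x : x \in A -> A \subset D ->
  H D A x = \sum_(t in D) K D t * (if t == x then (D == A)%:R else H (D :\ t) A x).
Proof.
move=> xA AD; have xD : x \in D by move/subsetP: AD; apply.
have D0 : D != set0 by apply/set0Pn; exists x.
rewrite /H big_mkcondr /= decomp //; apply: eq_bigr => t tD.
case: (eqVneq t x) => [<-|tx].
  rewrite (eq_bigr (fun r => if D == A then K D t * nuD (D :\ t) r else 0)); last first.
    by move=> r h; rewrite L_ext_t // nu_ext.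
  case: (eqVneq D A) => _ /=.
    by rewrite -big_distrr /= F1.
  by rewrite big1 ?mulr0.
rewrite [in RHS]big_mkcondr /= big_distrr /=; apply: eq_bigr => r h.
rewrite L_ext // ?nu_ext //; last by rewrite eq_sym.
by case: ifP; rewrite ?mulr0.
Qed.

Lemma H_DD D y : y \in D -> H D D y = K D y.
Proof.
move=> yD; rewrite H_dec // (bigD1 y) //= eqxx eqxx mulr1 big1 ?addr0 //.
move=> t /andP[tD ty]; rewrite (negPf ty) H_out ?mulr0 //.
apply/subsetPn; exists t => //; by rewrite !inE eqxx.
Qed.

Lemma markov D A x : x \in A -> H D A x = (\sum_(y in A) H D A y) * K A x.
Proof.
move: x; have [n le] := ubnP #|D|; elim: n D le => // n IH D le x xA.
case: (boolP (A \subset D)) => AD; last first.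
  by rewrite !H_out // big1 ?mul0r // => y _; rewrite H_out.
have A0 : A != set0 by apply/set0Pn; exists x.
case: (eqVneq A D) => [eAD|nAD].
  subst A; rewrite H_DD // (eq_bigr (fun y => K D y)) ?K_sum ?mul1r //.
  by move=> y yD; rewrite H_DD.
have step : forall y, y \in A -> H D A y = \sum_(t in D) K D t * H (D :\ t) A y.
  move=> y yA; rewrite H_dec //; apply: eq_bigr => t tD.
  case: (eqVneq t y) => [ty|_] //; subst t.
  rewrite eq_sym (negPf nAD) H_out //; apply/subsetPn; exists y => //; by rewrite !inE eqxx.
have IH' : forall t y, t \in D -> y \in A ->
    H (D :\ t) A y = (\sum_(z in A) H (D :\ t) A z) * K A y.
  move=> t y tD yA; apply: IH => //; by move: le; rewrite (cardsD1 t D) tD.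
rewrite step //.
rewrite [in RHS](eq_bigr (fun y => \sum_(t in D) K D t * H (D :\ t) A y)); last by move=> y yA; rewrite step.
rewrite exchange_big /= big_distrl /=; apply: eq_bigr => t tD.
by rewrite IH' // -big_distrr /= mulrA.
Qed.

End Flow.



Section Lower.
Variables (R : realFieldType) (X : finType).
Implicit Types (A B C D : {set X}) (r : {ffun X * X -> bool}).

Lemma sum_ind_uniq (I : finType) (P Q : pred I) :
  (forall i j, P i -> Q i -> P j -> Q j -> i = j) ->
  \sum_(i | P i) (Q i)%:R = [exists i, P i && Q i]%:R :> R.
Proof.
move=> U; case: existsP => [[i /andP[Pi Qi]]|none].
  rewrite (bigD1 i) //= Qi big1 ?addr0 // => j /andP[Pj ji].
  case Qj: (Q j) => //; by rewrite (U _ _ Pi Qi Pj Qj) eqxx in ji.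
apply: big1 => i Pi; case Qi: (Q i) => //; exfalso; apply: none; exists i; by rewrite Pi Qi.
Qed.

Lemma L_inj D r x x' : lin_on D r -> x \in D -> x' \in D -> L D r x = L D r x' -> x = x'.
Proof.
move=> h xD x'D e; apply/eqP; apply: contraT => ne.
have a : x \in L D r x' by rewrite -e L_in.
have b : x' \in L D r x by rewrite e L_in.
move: a b; rewrite !inE => /andP[_ a] /andP[_ b].
by have := lo_tot h xD x'D ne; rewrite (negPf a) (negPf b).
Qed.

Lemma lower r A : lin_on setT r -> A != set0 -> A != setT ->
  [exists y, (y \in A) && (L setT r y == A)] = [exists z, (z \in ~: A) && (L setT r z == z |: A)].
Proof.
move=> h A0 AT; apply/existsP/existsP => -[u /andP[uA /eqP e]].
- have nA0 : ~: A != set0 by apply: contra AT => /eqP eA; rewrite -(setCK A) eA setC0.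
  have tot' : forall x y, x \in ~: A -> y \in ~: A -> x != y -> r (y, x) || r (x, y).
    by move=> x y _ _ xy; rewrite orbC; exact: lo_tot h (in_setT x) (in_setT y) xy.
  have [z zA zmin] := max_exists (B := ~: A) (rl := fun a b => r (b, a))
    (fun x => lo_irr x h) (fun x y z a b => lo_tr h b a) tot' nA0.
  exists z; rewrite zA /=; apply/eqP/setP => v; rewrite !inE /=.
  case: (eqVneq v z) => [->|vz] /=; first by rewrite (lo_irr z h).
  case: (boolP (v \in A)) => vA /=.
    apply/negP => rvz.
    have rzu : r (z, u).
      have : z \notin L setT r u by rewrite e; move: zA; rewrite inE.
      by rewrite !inE /= negbK.
    have : v \in L setT r u by rewrite e.
    by rewrite !inE /= (lo_tr h rvz rzu).
  by rewrite zmin // inE.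
- have [y yA ymax] := max_exists (B := A) (rl := fun a b => r (a, b))
    (fun x => lo_irr x h) (fun x y z a b => lo_tr h a b)
    (fun x y xB yB xy => lo_tot h (in_setT x) (in_setT y) xy) A0.
  exists y; rewrite yA /=; apply/eqP/setP => v; rewrite !inE /=.
  case: (eqVneq v y) => [->|vy]; first by rewrite (lo_irr y h) yA.
  case: (boolP (v \in A)) => vA.
    by rewrite (lo_asym h (ymax v vA vy)).
  have uy : u != y by apply/eqP => uy; move: uA; rewrite inE uy yA.
  have rzy : r (u, y).
    have : y \in L setT r u by rewrite e !inE yA orbT.
    rewrite !inE /= => nry.
    by have := lo_tot h (in_setT u) (in_setT y) uy; rewrite (negPf nry) orbF.
  case: (eqVneq v u) => [->|vu]; first by rewrite rzy.
  have : v \notin L setT r u by rewrite e !inE negb_or vu vA.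
  by rewrite !inE /= negbK => rvu; rewrite (lo_tr h rvu rzy).
Qed.

Lemma lower_sum r A : lin_on setT r -> A != set0 -> A != setT ->
  \sum_(y in A) (L setT r y == A)%:R = \sum_(z in ~: A) (L setT r z == z |: A)%:R :> R.
Proof.
move=> h A0 AT; rewrite !sum_ind_uniq ?lower //.
  move=> z z' zA /eqP e z'A /eqP e'; apply/eqP; apply: contraT => ne.
  move: zA z'A; rewrite !inE => zA z'A.
  case/orP: (lo_tot h (in_setT z) (in_setT z') ne) => rr.
    have : z' \in L setT r z by rewrite !inE /= (lo_asym h rr).
    by rewrite e !inE eq_sym (negPf ne) (negPf z'A).
  have : z \in L setT r z' by rewrite !inE /= (lo_asym h rr).
  by rewrite e' !inE (negPf ne) (negPf zA).
by move=> y y' _ /eqP e _ /eqP e'; apply: (L_inj h (in_setT _) (in_setT _)); rewrite e e'.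
Qed.

End Lower.



Section Flow2.
Variables (R : realFieldType) (X : finType).
Implicit Types (A B C D : {set X}) (r : {ffun X * X -> bool}).
Variable w : X -> {set X} -> R.
Hypothesis wpos : forall x A, x \in A -> 0 <= w x A.
Hypothesis wcons : forall A, A != set0 -> A != setT ->
  out w A = \sum_(z in ~: A) w z (z |: A).
Hypothesis wtop : forall x0 : X, out w setT = 1.

Lemma sumH A : \sum_(y in A) H w setT A y =
  \sum_(r | lin_on setT r) (\sum_(y in A) (L setT r y == A)%:R) * nuD w setT r.
Proof.
rewrite /H; under eq_bigr => y _ do rewrite big_mkcondr.
rewrite exchange_big /=; apply: eq_bigr => r h; rewrite big_distrl /=.
by apply: eq_bigr => y _; case: eqP; rewrite ?mul1r ?mul0r.
Qed.

Lemma sumH2 A : \sum_(z in ~: A) H w setT (z |: A) z =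
  \sum_(r | lin_on setT r) (\sum_(z in ~: A) (L setT r z == z |: A)%:R) * nuD w setT r.
Proof.
rewrite /H; under eq_bigr => y _ do rewrite big_mkcondr.
rewrite exchange_big /=; apply: eq_bigr => r h; rewrite big_distrl /=.
by apply: eq_bigr => y _; case: eqP; rewrite ?mul1r ?mul0r.
Qed.

Lemma P_out A : A != set0 -> \sum_(y in A) H w setT A y = out w A.
Proof.
move=> A0; have [n le] := ubnP #|~: A|; elim: n A le A0 => // n IH A le A0.
have [x0 _] := set0Pn _ A0.
case: (eqVneq A setT) => [->|AT].
  rewrite (wtop x0) (eq_bigr (fun y => K w setT y)); last by move=> y _; rewrite H_DD.
  by rewrite K_sum //; apply/set0Pn; exists x0.
rewrite sumH (eq_bigr (fun r => (\sum_(z in ~: A) (L setT r z == z |: A)%:R) * nuD w setT r)); last first.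
  by move=> r h; rewrite lower_sum.
rewrite -sumH2 wcons //; apply: eq_bigr => z zA.
rewrite markov // ?setU11 // IH ?outK ?setU11 //.
  move: le; rewrite setCU (cardsD1 z (~: A)) zA add1n ltnS; apply: leq_trans.
  rewrite -setCU; apply: subset_leq_card; apply/subsetP => u; rewrite !inE.
  by rewrite negb_or => /andP[-> ->].
by apply/set0Pn; exists z; rewrite setU11.
Qed.

Lemma H_w A x : x \in A -> H w setT A x = w x A.
Proof.
move=> xA; rewrite markov // P_out ?outK //; by apply/set0Pn; exists x.
Qed.

End Flow2.



Section Fal.
Variables (R : realFieldType) (X : finType).
Implicit Types (A B C D : {set X}) (r : {ffun X * X -> bool}).

Lemma linE r : is_linorder r = lin_on setT r.
Proof.
apply/idP/idP => h.
  case/and3P: h => /forallP irr /forallP tr /forallP tot.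
  apply: lin_onI.
  - by move=> *; rewrite !in_setT.
  - by move=> x; apply/negbTE.
  - by move=> x y z a b; move: (tr x) => /forallP /(_ y) /forallP /(_ z) /implyP; apply; rewrite a b.
  - by move=> x y _ _ xy; move: (tot x) => /forallP /(_ y) /implyP; apply.
apply/and3P; split.
- by apply/forallP => x; rewrite (lo_irr x h).
- do 3 apply/forallP => ?; apply/implyP => /andP[]; exact: lo_tr h.
- do 2 apply/forallP => ?; apply/implyP; exact: lo_tot h (in_setT _) (in_setT _).
Qed.

Lemma lin_val (o : linorder X) : lin_on setT (val o).
Proof. by rewrite -linE; exact: valP o. Qed.

Lemma sum_lin (P : pred {ffun X * X -> bool}) (F : {ffun X * X -> bool} -> R) :
  \sum_(o : linorder X | P (val o)) F (val o) = \sum_(r | lin_on setT r && P r) F r.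
Proof.
rewrite (reindex_omap (val : linorder X -> _) insub); last first.
  by move=> i /andP[iA Pi]; rewrite insubT // linE.
apply: eq_bigl => -[i iA] /=; rewrite -linE iA /= insubT /=.
by case: (P i) => //=; apply/esym/eqP.
Qed.

Lemma inNE x A (o : linorder X) : x \in A -> inN x A o = (A \subset L setT (val o) x).
Proof.
move=> xA; have h := lin_val o.
apply/forallP/subsetP => Hf y.
  move=> yA; rewrite !inE /=; case: (eqVneq y x) => [->|yx]; first by rewrite (lo_irr x h).
  move: (Hf y); rewrite !inE yx yA /= /succ; move=> rxy; by rewrite (lo_asym h rxy).
apply/implyP; rewrite !inE => /andP[yx yA]; move: (Hf y yA); rewrite !inE /= /succ; move=> nr.
have xy : x != y by rewrite eq_sym.
have := lo_tot h (in_setT x) (in_setT y) xy.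
by rewrite (negPf nr) orbF.
Qed.

Variable rho : X -> {set X} -> R.
Hypothesis rpos : forall x A, x \in A -> 0 <= rho x A.
Hypothesis rsum : forall A, A != set0 -> \sum_(x in A) rho x A = 1.
Hypothesis rmob : forall x A, x \in A -> 0 <= mob1 rho x A.

Definition fal : {ffun linorder X -> R} := [ffun o => nuD (mob1 rho) setT (val o)].

Lemma mob_cons A : A != set0 -> A != setT ->
  out (mob1 rho) A = \sum_(z in ~: A) mob1 rho z (z |: A).
Proof.
move=> A0 AT; rewrite /out /mob1 exchange_big /=.
have E : forall A', A \subset A' ->
    \sum_(x in A) (-1) ^+ #|A' :\: A| * rho x A' =
    (-1) ^+ #|A' :\: A| - \sum_(x in A' :\: A) (-1) ^+ #|A' :\: A| * rho x A'.
  move=> A' AA'; rewrite -!big_distrr /=.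
  have A'0 : A' != set0.
    apply: contraNneq A0 => e; apply/eqP; apply/setP => u; rewrite inE.
    apply/negP => uA; move/subsetP: AA' => /(_ u uA); by rewrite e inE.
  have E1 : \sum_(x in A) rho x A' = 1 - \sum_(x in A' :\: A) rho x A'.
    by rewrite -(rsum A'0) [in RHS](big_setID A) /= (setIidPr AA') addrK.
  by rewrite E1 mulrBr mulr1.
rewrite (eq_bigr _ E) sumrB.
have -> : \sum_(A' : {set X} | A \subset A') (-1) ^+ #|A' :\: A| = 0 :> R.
  rewrite (eq_bigl (fun A' => (A \subset A') && (A' \subset setT))); last first.
    by move=> A'; rewrite subsetT andbT.
  by rewrite alt2 ?subsetT // (negPf AT).
rewrite sub0r (exchange_big_dep (fun x => x \in ~: A)) /=; last first.
  by move=> A' x _; rewrite !inE => /andP[].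
rewrite -sumrN; apply: eq_bigr => z zA.
rewrite -sumrN; apply: eq_big => A'.
  by move: zA; rewrite inE => zA; rewrite subUset sub1set !inE (negPf zA) /= andbC.
move=> /andP[AA' zA'].
rewrite -mulNr; congr (_ * _).
rewrite (cardsD1 z (A' :\: A)) zA' add1n exprS mulN1r opprK.
have -> : (A' :\: A) :\ z = A' :\: (z |: A); last by [].
apply/setP => u; rewrite !inE negb_or.
by case: (u != z); case: (u \in A); case: (u \in A').
Qed.

Lemma mob_top (x0 : X) : out (mob1 rho) setT = 1.
Proof.
rewrite /out -(rsum (A := setT)); last by apply/set0Pn; exists x0.
apply: eq_bigr => x _; rewrite /mob1 (big_pred1 setT).
  by rewrite setDv cards0 expr0 mul1r.
by move=> A'; rewrite /= subTset eq_sym.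
Qed.

Lemma falmagne : is_distr fal /\
  forall A x, x \in A -> \sum_(o | inN x A o) fal o = rho x A.
Proof.
have wpos : forall x A, x \in A -> 0 <= mob1 rho x A by [].
split; first split.
- move=> o; rewrite ffunE; apply: prodr_ge0 => x _; apply: K_ge0 => //.
  by apply: L_in => //; apply: lin_val.
- rewrite (eq_bigr (fun o => nuD (mob1 rho) setT (val o))); last by move=> o _; rewrite ffunE.
  rewrite (sum_lin xpredT (nuD (mob1 rho) setT)).
  rewrite -(F1 (mob1 rho) setT); apply: eq_bigl => r; by rewrite andbT.
move=> A x xA.
rewrite (eq_bigr (fun o => nuD (mob1 rho) setT (val o))); last by move=> o _; rewrite ffunE.
rewrite (eq_bigl (fun o => A \subset L setT (val o) x)); last by move=> o; rewrite inNE.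
rewrite (sum_lin (fun r => A \subset L setT r x) (nuD (mob1 rho) setT)).
rewrite (partition_big (fun r => L setT r x) (fun A' => A \subset A')) /=; last by move=> r /andP[].
rewrite -(inv1 rho x A); apply: eq_bigr => A' AA'.
rewrite -(H_w wpos (@mob_cons) (@mob_top)); last by move/subsetP: AA'; apply.
apply: eq_bigl => r; rewrite -andbA; congr (_ && _).
by case: eqP => [->|]; rewrite ?AA' ?andbF.
Qed.

End Fal.



Section Main.
Variables (X : finType) (R : realFieldType).
Implicit Types (A B C D : {set X}).

Definition PN (f : {ffun linorder X -> R}) x A := \sum_(o | inN x A o) f o.

Lemma dbl_prod (f g : {ffun linorder X -> R}) x y A B :
  \sum_(o | inN x A o) \sum_(o' | inN y B o') f o * g o' = PN f x A * PN g y B.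
Proof. by rewrite /PN big_distrl /=; apply: eq_bigr => o _; rewrite big_distrr. Qed.

Lemma PN_sum (f : {ffun linorder X -> R}) B : is_distr f -> B != set0 ->
  \sum_(y in B) PN f y B = 1.
Proof.
move=> [f0 f1] B0; rewrite -f1 /PN.
under eq_bigr => y _ do rewrite big_mkcond /=.
rewrite exchange_big /=; apply: eq_bigr => o _.
rewrite (eq_bigr (fun y => (inN y B o)%:R * f o)); last by move=> y _; case: ifP; rewrite ?mul1r ?mul0r.
rewrite -big_distrl /= sum_ind_uniq.
  have h := lin_val o.
  have [t tB tmax] := max_exists (B := B) (rl := fun a b => val o (a, b))
    (fun x => lo_irr x h) (fun x y z a b => lo_tr h a b)
    (fun x y xB yB xy => lo_tot h (in_setT x) (in_setT y) xy) B0.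
  suff -> : [exists i, (i \in B) && inN i B o] by rewrite mul1r.
  apply/existsP; exists t; rewrite tB /=; apply/forallP => z; apply/implyP.
  by rewrite !inE => /andP[zt zB]; apply: tmax.
move=> y y' yB /forallP Hy y'B /forallP Hy'; apply/eqP; apply: contraT => ne.
have ne' : y' != y by rewrite eq_sym.
move: (Hy y'); rewrite !inE ne' y'B /=; move=> a.
move: (Hy' y); rewrite !inE ne yB /=; move=> b.
have a' : val o (y, y') := a; have b' : val o (y', y) := b.
by rewrite (lo_asym (lin_val o) a') in b'.
Qed.

Lemma PN_mob (f : {ffun linorder X -> R}) x A : is_distr f -> x \in A ->
  0 <= mob1 (PN f) x A.
Proof.
move=> [f0 f1] xA.
pose G x A := \sum_(o | L setT (val o) x == A) f o.
have E : forall A', x \in A' -> PN f x A' = \sum_(A'' : {set X} | A' \subset A'') G x A''.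
  move=> A' xA'; rewrite /PN (eq_bigl (fun o => A' \subset L setT (val o) x)); last first.
    by move=> o; rewrite inNE.
  rewrite (partition_big (fun o => L setT (val o) x) (fun A'' => A' \subset A'')) //.
  apply: eq_bigr => A'' h; apply: eq_bigl => o.
  by case: eqP => [->|]; rewrite ?h ?andbF.
have -> : mob1 (PN f) x A = mob1 (fun x A => \sum_(A'' : {set X} | A \subset A'') G x A'') x A.
  apply: eq_bigr => A' AA'; rewrite E //; by move/subsetP: AA'; apply.
by rewrite inv2; apply: sumr_ge0.
Qed.

Lemma mob_fact (p : X -> X -> {set X} -> {set X} -> R) (f g : {set X} -> R) x y A B :
  (forall A' B', A \subset A' -> B \subset B' -> p x y A' B' = f A' * g B') ->
  mobius p x y A B =
  (\sum_(A' : {set X} | A \subset A') (-1) ^+ #|A' :\: A| * f A') *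
  (\sum_(B' : {set X} | B \subset B') (-1) ^+ #|B' :\: B| * g B').
Proof.
move=> hf; rewrite /mobius big_distrl /=; apply: eq_bigr => A' AA'.
rewrite big_distrr /=; apply: eq_bigr => B' BB'.
by rewrite hf // exprD; ring.
Qed.

Lemma sumT (F : X -> R) : \sum_(y in [set: X]) F y = \sum_y F y.
Proof. by apply: eq_bigl => y; rewrite in_setT. Qed.

Lemma subne0 A A' (x : X) : x \in A -> A \subset A' -> (A' != set0) * (x \in A').
Proof.
move=> xA AA'; have xA' : x \in A' by move/subsetP: AA'; apply.
split => //; by apply/set0Pn; exists x.
Qed.

Theorem theorem6_aux (p : X -> X -> {set X} -> {set X} -> R) :
  is_rjcr p ->
  (consistent_SICDRU p <->
   [/\ complete_monotonicity p, marginality p & choice_set_independence p]).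
Proof.
move=> [hpos hsum]; split.
- move=> [nu [t [hnu [ht hp]]]].
  have pf : forall A B x y, A != set0 -> B != set0 -> x \in A -> y \in B ->
      p x y A B = PN nu x A * PN (t x) y B.
    by move=> A B x y A0 B0 xA yB; rewrite hp // dbl_prod.
  split.
  + move=> A B x y A0 B0 xA yB.
    rewrite (mob_fact (f := PN nu x) (g := PN (t x) y)).
      by apply: mulr_ge0; [apply: (PN_mob hnu xA) | apply: (PN_mob (ht x) yB)].
    move=> A' B' AA' BB'; have [A'0 xA'] := subne0 xA AA'; have [B'0 yB'] := subne0 yB BB'.
    by rewrite pf.
  + move=> A B C x A0 B0 C0 xA.
    rewrite (eq_bigr (fun y => PN nu x A * PN (t x) y B)); last by move=> y yB; rewrite pf.
    rewrite [RHS](eq_bigr (fun y => PN nu x A * PN (t x) y C)); last by move=> y yC; rewrite pf.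
    by rewrite -!big_distrr /= !PN_sum.
  + have pm : forall x A, x \in A -> pmarg p x A = PN nu x A.
      move=> x A xA; have A0 : A != set0 by apply/set0Pn; exists x.
      have T0 : [set: X] != set0 by apply/set0Pn; exists x.
      rewrite /pmarg (eq_bigr (fun y => PN nu x A * PN (t x) y setT)); last first.
        by move=> y _; rewrite pf.
      by rewrite -big_distrr /= -sumT PN_sum // mulr1.
    move=> B y A A' x B0 yB A0 A'0 xA xA' h1 h2.
    rewrite !pm // in h1 h2 *; rewrite !pf //.
    by rewrite [LHS]mulrAC [RHS]mulrAC (divff (lt0r_neq0 h1)) (divff (lt0r_neq0 h2)).
- move=> [CM MG CSI].
  pose rho x A := pmarg p x A.
  have ne : forall (x : X) A, x \in A -> A != set0 by move=> x A xA; apply/set0Pn; exists x.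
  have rpos : forall x A, x \in A -> 0 <= rho x A.
    move=> x A xA; apply: sumr_ge0 => y _; apply: hpos; rewrite ?in_setT //.
      exact: ne xA.
    exact: ne (in_setT y).
  have rsum : forall A, A != set0 -> \sum_(x in A) rho x A = 1.
    move=> A A0; have [x0 _] := set0Pn _ A0.
    rewrite -(hsum A setT A0 (ne _ _ (in_setT x0))).
    apply: eq_bigr => x _; by rewrite /rho /pmarg sumT.
  have mobT : forall x y A, mobius p x y A setT =
      \sum_(A' : {set X} | A \subset A') (-1) ^+ #|A' :\: A| * p x y A' setT.
    move=> x y A; rewrite /mobius; apply: eq_bigr => A' _.
    rewrite (big_pred1 setT); last by move=> B'; rewrite /= subTset eq_sym.
    by rewrite setDv cards0 addn0.
  have rmob : forall x A, x \in A -> 0 <= mob1 rho x A.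
    move=> x A xA.
    have -> : mob1 rho x A = \sum_y mobius p x y A setT.
      under [RHS]eq_bigr => y _ do rewrite mobT.
      rewrite /mob1 exchange_big /=; apply: eq_bigr => A' _; by rewrite /rho /pmarg big_distrr.
    apply: sumr_ge0 => y _; apply: CM; [exact: ne xA | exact: ne (in_setT y) | exact: xA | exact: in_setT].
  have [hnu hnuP] := falmagne rsum rmob.
  have zero : forall x y A B, x \in A -> y \in B -> rho x A = 0 -> p x y A B = 0.
    move=> x y A B xA yB r0.
    have s0 : \sum_(y' in B) p x y' A B = 0.
      by rewrite (MG A B setT x) ?sumT //; [exact: ne xA | exact: ne yB | exact: ne (in_setT x)].
    apply: (psumr_eq0P _ s0) => // y' yB'; apply: hpos => //; [exact: ne xA | exact: ne yB].
  pose hasA (x : X) := [exists A : {set X}, (x \in A) && (0 < rho x A)].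
  pose A0 (x : X) := odflt setT [pick A : {set X} | (x \in A) && (0 < rho x A)].
  have A0P : forall x, hasA x -> (x \in A0 x) && (0 < rho x (A0 x)).
    move=> x /existsP [A hA]; rewrite /A0; case: pickP => [A' -> //| /(_ A)]; by rewrite hA.
  pose rx (x y : X) (B : {set X}) := p x y (A0 x) B / rho x (A0 x).
  have fact : forall x, hasA x -> forall A B y, x \in A -> y \in B -> p x y A B = rho x A * rx x y B.
    move=> x hx A B y xA yB; have /andP[xA0 r0] := A0P x hx.
    have := rpos x A xA; rewrite le_eqVlt => /orP [/eqP e|rp].
      by rewrite -e mul0r; apply: zero => //; rewrite -e.
    have := CSI B y A (A0 x) x (ne _ _ yB) yB (ne _ _ xA) (ne _ _ xA0) xA xA0 rp r0.
    rewrite /rx => <-; rewrite mulrC divfK //; exact: lt0r_neq0.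
  have rxpos : forall x, hasA x -> forall y B, y \in B -> 0 <= rx x y B.
    move=> x hx y B yB; have /andP[xA0 r0] := A0P x hx.
    apply: divr_ge0; last exact: ltW.
    apply: hpos => //; [exact: ne xA0 | exact: ne yB].
  have rxsum : forall x, hasA x -> forall B, B != set0 -> \sum_(y in B) rx x y B = 1.
    move=> x hx B B0; have /andP[xA0 r0] := A0P x hx.
    rewrite /rx -big_distrl /= (MG (A0 x) B setT x) ?sumT //; [|exact: ne xA0 | exact: ne (in_setT x)].
    apply: divff; exact: lt0r_neq0.
  have rxmob : forall x, hasA x -> forall y B, y \in B -> 0 <= mob1 (rx x) y B.
    move=> x hx y B yB; have /andP[xA0 r0] := A0P x hx.
    have [A1 /andP[h1 h2]] : exists A1 : {set X}, (A0 x \subset A1) && (0 < mob1 rho x A1).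
      case: (boolP [exists A1 : {set X}, (A0 x \subset A1) && (0 < mob1 rho x A1)]) => [/existsP//|/existsPn none].
      exfalso; have e : rho x (A0 x) = 0.
        rewrite -(inv1 rho x (A0 x)); apply: big1 => A' hA'.
        have xA' : x \in A' by move/subsetP: hA'; apply.
        have := rmob x A' xA'; rewrite le_eqVlt.
        by have := none A'; rewrite hA' /= => /negPf ->; rewrite orbF => /eqP <-.
      by rewrite e ltxx in r0.
    have xA1 : x \in A1 by move/subsetP: h1; apply.
    have := CM A1 B x y (ne _ _ xA1) (ne _ _ yB) xA1 yB.
    rewrite (mob_fact (f := rho x) (g := rx x y)); last first.
      move=> A' B' AA' BB'; apply: fact => //.
        by move/subsetP: AA'; apply.
      by move/subsetP: BB'; apply.
    by rewrite (pmulr_rge0 _ h2).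
  pose t (x : X) := if hasA x then fal (rx x) else fal rho.
  exists (fal rho), t; split => //; split.
    move=> x; rewrite /t; case: ifP => hx //.
    exact: (falmagne (rxsum x hx) (rxmob x hx)).1.
  move=> A B x y A0' B0 xA yB.
  rewrite dbl_prod /PN hnuP // /t; case: ifP => hx.
    rewrite (falmagne (rxsum x hx) (rxmob x hx)).2 //; exact: fact.
  have e : rho x A = 0.
    have := rpos x A xA; rewrite le_eqVlt => /orP [/eqP <- //|rp].
    by move: hx; rewrite /hasA; case: existsP => // -[]; exists A; rewrite xA rp.
  by rewrite e mul0r; apply: zero.
Qed.

End Main.

Theorem theorem6 (X : finType) (R : realFieldType)
    (p : X -> X -> {set X} -> {set X} -> R) :
  is_rjcr p ->
  (consistent_SICDRU p <->
   [/\ complete_monotonicity p, marginality p & choice_set_independence p]).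
Proof. exact: theorem6_aux. Qed.
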